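(* Let $n(k_1,k_2,k_3)=(e^{ik_1}-1)(e^{ik_2}-1)(e^{ik_3}-1)+\overline{(e^{ik_1}-1)(e^{ik_2}-1)(e^{ik_3}-1)}$. There exists $C>0$ such that for all $k_1,k_2,k_3\in(-\pi,\pi]$, with $k=k_1+k_2+k_3$, we have $|n(k_1,k_2,k_3)|\le C|k|$. *)

(* Defs.v *)
From Stdlib Require Import Reals.
From Coquelicot Require Import Coquelicot.
Open Scope R_scope.

Definition expi (k : R) : C := (cos k, sin k).

Definition nfun (k1 k2 k3 : R) : C :=
  let w := Cmult (Cmult (Cminus (expi k1) (RtoC 1)) (Cminus (expi k2) (RtoC 1)))
                 (Cminus (expi k3) (RtoC 1)) in
  Cplus w (Cconj w).

(* Main.v *)
Require Import Defs.
From Stdlib Require Import Reals.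
From Coquelicot Require Import Coquelicot.
From Stdlib Require Import Ratan Lra.
Open Scope R_scope.

Lemma abs_sin_pos x : 0 < x -> Rabs (sin x) <= x.
Proof.
  intro Hx. pose proof (sin_lt_x x Hx). pose proof (SIN_bound x).
  apply Rabs_le. split; [|lra].
  destruct (Rle_dec 1 x). lra.
  assert (0 <= sin x). { apply sin_ge_0; pose proof PI2_3_2; lra. } lra.
Qed.

Lemma abs_sin_le x : Rabs (sin x) <= Rabs x.
Proof.
  destruct (Rtotal_order x 0) as [H|[H|H]].
  - replace x with (- (- x)) by ring. rewrite sin_neg, Rabs_Ropp, Rabs_Ropp.
    rewrite (Rabs_right (-x)) by lra. apply abs_sin_pos; lra.
  - subst. rewrite sin_0. right; reflexivity.
  - rewrite (Rabs_right x) by lra. apply abs_sin_pos; lra.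
Qed.

Lemma nfun_eq k1 k2 k3 :
  nfun k1 k2 k3 = RtoC (16 * (sin (k1/2) * sin (k2/2) * sin (k3/2)) * sin ((k1+k2+k3)/2)).
Proof.
  unfold nfun, expi, Cplus, Cmult, Cminus, Copp, Cconj, RtoC; simpl.
  assert (E: forall k, cos k = 1 - 2 * sin (k/2) * sin (k/2) /\ sin k = 2 * sin (k/2) * cos (k/2)).
  { intro k. rewrite <- (sin_2a (k/2)), <- (cos_2a_sin (k/2)).
    replace (2*(k/2)) with k by field. split; reflexivity. }
  destruct (E k1) as [C1 S1]; destruct (E k2) as [C2 S2]; destruct (E k3) as [C3 S3].
  rewrite C1, S1, C2, S2, C3, S3.
  replace ((k1+k2+k3)/2) with (k1/2 + k2/2 + k3/2) by field.
  rewrite !sin_plus, !cos_plus.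
  apply injective_projections; simpl; ring.
Qed.

Theorem mainTheorem3 :
  exists C0 : R, 0 < C0 /\
    forall k1 k2 k3 : R,
      -PI < k1 <= PI -> -PI < k2 <= PI -> -PI < k3 <= PI ->
      Cmod (nfun k1 k2 k3) <= C0 * Rabs (k1 + k2 + k3).
Proof.
  exists 8. split; [lra|]. intros k1 k2 k3 _ _ _.
  rewrite nfun_eq, Cmod_R, !Rabs_mult.
  pose proof (abs_sin_le ((k1+k2+k3)/2)) as Hs.
  assert (Hk: Rabs ((k1+k2+k3)/2) = Rabs (k1+k2+k3) / 2).
  { unfold Rdiv. rewrite Rabs_mult, (Rabs_right (/2)); lra. }
  rewrite Hk in Hs.
  assert (forall y, Rabs (sin y) <= 1) as B.
  { intro y. apply Rabs_le. apply SIN_bound. }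
  pose proof (B (k1/2)); pose proof (B (k2/2)); pose proof (B (k3/2)).
  pose proof (Rabs_pos (sin (k1/2))); pose proof (Rabs_pos (sin (k2/2))); pose proof (Rabs_pos (sin (k3/2))).
  pose proof (Rabs_pos (sin ((k1+k2+k3)/2))).
  rewrite (Rabs_right 16) by lra.
  set (a := Rabs (sin (k1/2))) in *. set (b := Rabs (sin (k2/2))) in *.
  set (c := Rabs (sin (k3/2))) in *. set (d := Rabs (sin ((k1+k2+k3)/2))) in *.
  assert (a*b*c <= 1).
  { assert (a*b <= 1) by nra. nra. }
  assert (0 <= a*b*c) by (apply Rmult_le_pos; [apply Rmult_le_pos|]; lra).
  assert (a*b*c*d <= d) by nra.
  lra.
Qed.
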